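(* Assume (A1), (A2), (A3). There are explicit constants $\mathcal C_1,\mathcal C_2,\mathcal C_r,\mathcal C_z>0$ such that for all $x,x',v,v'\in\mathbb R^d$, \[|x-x'|+|v-v'|\le\mathcal C_1\rho((x,v),(x',v')),\qquad |x-x'|^2+|v-v'|^2\le\mathcal C_2\rho((x,v),(x',v')),\] \[r(x,x',v,v')\le\mathcal C_r\rho((x,v),(x',v')),\qquad |x-x'|\le\mathcal C_zf(r(x,x',v,v'))\big(1+\epsilon\sqrt{H(x,v)}+\epsilon\sqrt{H(x',v')}\big).\]
   Context: $U,W\in\mathcal C^1(\mathbb R^d)$. (A1): $U\ge0$ and there exist $\lambda>0$, $A\ge0$ with $\tfrac12\nabla U(x)\cdot x\ge\lambda(U(x)+|x|^2/4)-A$ for all $x$. (A2): $\nabla U$ is $L_U$-Lipschitz, $L_U>0$. (A3): $W$ even, $\nabla W$ is $L_W$-Lipschitz, $L_W<\lambda/8$. Fix $\tilde A\ge0$ with $U(x)\ge\frac\lambda6|x|^2-\tilde A$ for all $x$. Set $\gamma=\frac{\lambda}{2(\lambda+1)}$, $B=24(A+(\lambda-\gamma)\tilde A+d)$, $H(x,v)=24U(x)+(6(1-\gamma)+\lambda)|x|^2+12x\cdot v+12|v|^2$, $\alpha=L_U+\frac\lambda4$, $R_1=\sqrt{\frac{24((1+\alpha)^2+\alpha^2)}{5\gamma\min(3,\lambda/3)}B}$, $r(x,\tilde x,v,\tilde v)=\alpha|x-\tilde x|+|x-\tilde x+v-\tilde v|$, $\kappa_0=\frac{L_U+L_W}\alpha+\alpha+96\max(\frac1{2\alpha},1)$,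 $c=\min\{\frac\gamma{36},\frac B3,\frac17\min(\frac12-\frac{L_U+L_W}{2\alpha},2\sqrt{\frac{L_U+L_W}{2\pi\alpha}})\exp(-\frac18\kappa_0R_1^2)\}$, $\epsilon=3c/B$, $\mathbf C=c+2\epsilon B$, $\phi(s)=\exp(-\frac18(\frac{L_U+L_W}\alpha+\alpha+96\epsilon\max(\frac1{2\alpha},1))s^2)$, $\Phi(s)=\int_0^s\phi$, $g(s)=1-\frac{\mathbf C}4\int_0^s\frac{\Phi(u)}{\phi(u)}du$, $f(s)=\int_0^{\min(s,R_1)}\phi(u)g(u)du$. Finally $\rho((x,v),(\tilde x,\tilde v))=f(r(x,\tilde x,v,\tilde v))\big(1+\epsilon H(x,v)+\epsilon H(\tilde x,\tilde v)\big)$. *)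

(* Defs.v *)
From HB Require Import structures.
From mathcomp Require Import all_boot all_order all_algebra.
From mathcomp Require Import all_classical all_reals all_analysis.
Set Implicit Arguments. Unset Strict Implicit. Unset Printing Implicit Defensive.
Import Order.TTheory GRing.Theory Num.Theory.
Import numFieldNormedType.Exports.
Local Open Scope classical_set_scope.
Local Open Scope ring_scope.

Section Defs.
Variables (R : realType) (d : nat).
Notation vec := 'rV[R]_d.

Definition dot (x y : vec) : R := \sum_(i < d) x ord0 i * y ord0 i.
Definition enorm (x : vec) : R := Num.sqrt (dot x x).

Definition int0 (s : R) (f : R -> R) : R :=
  Rintegral (@lebesgue_measure R) `[0, s] f.

Variables (lam A Atil LU LW : R) (U : vec -> R).

Definition gam : R := lam / (2 * (lam + 1)).
Definition Bc : R := 24 * (A + (lam - gam) * Atil + d%:R).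
Definition Hf (x v : vec) : R :=
  24 * U x + (6 * (1 - gam) + lam) * enorm x ^+ 2 + 12 * dot x v
  + 12 * enorm v ^+ 2.
Definition alph : R := LU + lam / 4.
Definition R1 : R :=
  Num.sqrt (24 * ((1 + alph) ^+ 2 + alph ^+ 2)
            / (5 * gam * Num.min 3 (lam / 3)) * Bc).
Definition rr (x x' v v' : vec) : R :=
  alph * enorm (x - x') + enorm (x - x' + (v - v')).
Definition kappa0 : R :=
  (LU + LW) / alph + alph + 96 * Num.max (1 / (2 * alph)) 1.
Definition cc : R :=
  Num.min (gam / 36) (Num.min (Bc / 3)
   (1 / 7 * Num.min (1 / 2 - (LU + LW) / (2 * alph))
                    (2 * Num.sqrt ((LU + LW) / (2 * pi * alph)))
    * expR (- (1 / 8) * kappa0 * R1 ^+ 2))).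
Definition eps : R := 3 * cc / Bc.
Definition Cb : R := cc + 2 * eps * Bc.
Definition phi (s : R) : R :=
  expR (- (1 / 8) * ((LU + LW) / alph + alph
                     + 96 * eps * Num.max (1 / (2 * alph)) 1) * s ^+ 2).
Definition Phi (s : R) : R := int0 s phi.
Definition gg (s : R) : R := 1 - Cb / 4 * int0 s (fun u => Phi u / phi u).
Definition ff (s : R) : R := int0 (Num.min s R1) (fun u => phi u * gg u).
Definition rho (x v x' v' : vec) : R :=
  ff (rr x x' v v') * (1 + eps * Hf x v + eps * Hf x' v').

End Defs.

(* Main.v *)
Require Import Defs.
From HB Require Import structures.
From mathcomp Require Import all_boot all_order all_algebra.
From mathcomp Require Import all_classical all_reals all_analysis.
From mathcomp Require Import ring lra.
Import Order.TTheory GRing.Theory Num.Theory.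
Import numFieldNormedType.Exports.
Local Open Scope ring_scope.
Set Implicit Arguments. Unset Strict Implicit.
Local Open Scope classical_set_scope.
Lemma nn_mono (R : realType) (D : set R) (f g : R -> \bar R) :
  (forall x, D x -> (0 <= f x)%E) -> (forall x, D x -> (f x <= g x)%E) ->
  (\int[@lebesgue_measure R]_(x in D) f x <= \int[@lebesgue_measure R]_(x in D) g x)%E.
Proof.
move=> f0 fg.
have g0 : forall x, D x -> (0 <= g x)%E by move=> x Dx; exact: le_trans (f0 x Dx) (fg x Dx).
rewrite !ge0_integralE //.
apply: le_ereal_sup => _ [h /= hf <-]; exists h => //= x.
apply: le_trans (hf x) _.
rewrite /patch; case: ifP => // /[1!inE] Dx; exact: fg.
Qed.
Lemma int0_sand (R : realType) (m lo hi : R) (f : R -> R) :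
  0 <= m -> 0 <= lo ->
  (forall x, 0 <= x <= m -> lo <= f x <= hi) ->
  lo * m <= int0 m f <= hi * m.
Proof.
move=> m0 lo0 hf.
pose D : set R := `[0, m]%classic.
have Dx : forall x, D x -> 0 <= x <= m.
  by move=> x; rewrite /D /= in_itv /=.
have mD : measurable D by exact: measurable_itv.
have mu : (@lebesgue_measure R D = m%:E).
  rewrite /D lebesgue_measure_itv /= lte_fin; case: ltrP => h.
    by rewrite oppr0 adde0.
  by have -> : m = 0 by apply/eqP; rewrite eq_le h m0.
have I1 : ((lo * m)%:E <= \int[@lebesgue_measure R]_(x in D) (f x)%:E)%E.
  have := @nn_mono R D (cst lo%:E) (fun x => (f x)%:E).
  rewrite integral_cst // EFinM -mu => H; apply: H.
  - by move=> x _; rewrite /= lee_fin.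
  - by move=> x /Dx /hf /andP[] h _; rewrite /= lee_fin.
have I2 : (\int[@lebesgue_measure R]_(x in D) (f x)%:E <= (hi * m)%:E)%E.
  have := @nn_mono R D (fun x => (f x)%:E) (cst hi%:E).
  rewrite integral_cst // EFinM -mu => H; apply: H.
  - by move=> x /Dx /hf /andP[] h _; rewrite lee_fin (le_trans lo0 h).
  - by move=> x /Dx /hf /andP[] _ h; rewrite /= lee_fin.
rewrite /int0 /Rintegral -/D.
have lohi : lo * m <= hi * m by rewrite -lee_fin (le_trans I1 I2).
move: I1 I2; case: (\int[_]_(_ in _) _)%E => [r | | ] //=; rewrite ?lee_fin.
- by move=> -> ->.
Qed.
Lemma consts (R : realType) (d : nat) (lam A Atil LU LW : R) :
  0 < lam -> 0 <= A -> 0 < LU -> 0 <= LW -> LW < lam / 8 -> 0 <= Atil ->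
  (0 < d)%N ->
  (0 < alph lam LU /\ 0 < gam lam /\ gam lam < 1/2 /\ 24 <= Bc d lam A Atil) /\
      (0 < cc d lam A Atil LU LW /\ cc d lam A Atil LU LW <= gam lam / 36 /\
      7 * cc d lam A Atil LU LW <= 1/2 * expR (- (1 / 8) * kappa0 lam LU LW * R1 d lam A Atil LU ^+ 2)).
Proof.
move=> hl hA hLU hLW0 hLW hAt hd.
have ha : 0 < alph lam LU by rewrite /alph; lra.
have hg : 0 < gam lam by rewrite /gam divr_gt0 //; lra.
have hg2 : gam lam < 1/2.
  rewrite /gam ltr_pdivrMr; last lra.
  lra.
have hgl : gam lam < lam.
  rewrite /gam ltr_pdivrMr; last lra.
  nra.
have hB : 24 <= Bc d lam A Atil.
  rewrite /Bc.
  have : 1 <= d%:R :> R by rewrite ler1n.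
  have : 0 <= (lam - gam lam) * Atil by apply: mulr_ge0 => //; lra.
  lra.
have hm1 : 0 < 1 / 2 - (LU + LW) / (2 * alph lam LU).
  rewrite subr_gt0 ltr_pdivrMr; last lra.
  rewrite /alph; lra.
have hm1' : (LU + LW) / (2 * alph lam LU) >= 0 by apply: divr_ge0; lra.
have hm2 : 0 < 2 * Num.sqrt ((LU + LW) / (2 * pi * alph lam LU)).
  apply: mulr_gt0 => //; rewrite sqrtr_gt0 divr_gt0 //; first lra.
  by rewrite mulr_gt0 // mulr_gt0 // pi_gt0.
have hE := expR_gt0 (- (1 / 8) * kappa0 lam LU LW * R1 d lam A Atil LU ^+ 2).
split; first by [].
split; [|split].
- rewrite /cc lt_min; apply/andP; split; first by rewrite divr_gt0.
  rewrite lt_min; apply/andP; split; first lra.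
  apply: mulr_gt0; last by [].
  apply: mulr_gt0; first lra.
  by rewrite lt_min hm1 hm2.
- by rewrite /cc ge_min lexx.
- rewrite /cc.
  set E := expR _.
  have h1 : Num.min (1 / 2 - (LU + LW) / (2 * alph lam LU))
      (2 * Num.sqrt ((LU + LW) / (2 * pi * alph lam LU))) <= 1/2.
    rewrite ge_min; apply/orP; left; lra.
  have h2 : Num.min (gam lam / 36) (Num.min (Bc d lam A Atil / 3)
   (1 / 7 * Num.min (1 / 2 - (LU + LW) / (2 * alph lam LU))
                    (2 * Num.sqrt ((LU + LW) / (2 * pi * alph lam LU)))
    * E)) <= 1 / 7 * Num.min (1 / 2 - (LU + LW) / (2 * alph lam LU))
                    (2 * Num.sqrt ((LU + LW) / (2 * pi * alph lam LU))) * E.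
    by rewrite ge_min; apply/orP; right; rewrite ge_min lexx orbT.
  have h3 := ler_wpM2r (ltW hE) h1.
  rewrite -/E in h3.
  lra.
Qed.

Lemma eps_facts (R : realType) (d : nat) (lam A Atil LU LW : R) :
  0 < lam -> 0 <= A -> 0 < LU -> 0 <= LW -> LW < lam / 8 -> 0 <= Atil ->
  (0 < d)%N ->
  0 < eps d lam A Atil LU LW /\ eps d lam A Atil LU LW <= 1/2 /\
  Cb d lam A Atil LU LW = 7 * cc d lam A Atil LU LW.
Proof.
move=> hl hA hLU hLW0 hLW hAt hd.
have [[ha [hg [hg2 hB]]] [hc [hc2 hc3]]] := consts hl hA hLU hLW0 hLW hAt hd.
have hB0 : Bc d lam A Atil != 0 by apply/eqP; lra.
split; [|split].
- by rewrite /eps divr_gt0 //; lra.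
- rewrite /eps ler_pdivrMr; lra.
- rewrite /Cb /eps -mulrA divfK //; lra.
Qed.

Lemma phi_bounds (R : realType) (d : nat) (lam A Atil LU LW : R) s :
  0 < lam -> 0 <= A -> 0 < LU -> 0 <= LW -> LW < lam / 8 -> 0 <= Atil ->
  0 < phi d lam A Atil LU LW s <= 1.
Proof.
move=> hl hA hLU hLW0 hLW hAt.
rewrite /phi expR_gt0 expR_le1 /=.
have ha : 0 < alph lam LU by rewrite /alph; lra.
have hg : 0 < gam lam by rewrite /gam divr_gt0 //; lra.
have hB : 0 <= Bc d lam A Atil.
  rewrite /Bc; apply: mulr_ge0 => //; apply: addr_ge0; [apply: addr_ge0|] => //.
  apply: mulr_ge0 => //; rewrite subr_ge0 /gam ler_pdivrMr; nra.
have he : 0 <= eps d lam A Atil LU LW.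
  rewrite /eps; apply: divr_ge0 => //; apply: mulr_ge0 => //.
  rewrite /cc le_min; apply/andP; split; first by apply: divr_ge0 => //; lra.
  rewrite le_min; apply/andP; split; first lra.
  apply: mulr_ge0; last exact: expR_ge0.
  apply: mulr_ge0; first lra.
  rewrite le_min; apply/andP; split; last by apply: mulr_ge0 => //; exact: sqrtr_ge0.
  rewrite subr_ge0 ler_pdivrMr; last lra.
  rewrite /alph; lra.
have hk : 0 <= (LU + LW) / alph lam LU + alph lam LU
   + 96 * eps d lam A Atil LU LW * Num.max (1 / (2 * alph lam LU)) 1.
  apply: addr_ge0; [apply: addr_ge0|].
  - by apply: divr_ge0; lra.
  - lra.
  - apply: mulr_ge0; first by apply: mulr_ge0.
    by rewrite le_max ler01 orbT.
have := sqr_ge0 s; nra.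
Qed.

Lemma gg_bound (R : realType) (d : nat) (lam A Atil LU LW : R) u :
  0 < lam -> 0 <= A -> 0 < LU -> 0 <= LW -> LW < lam / 8 -> 0 <= Atil ->
  (0 < d)%N -> 0 <= u <= R1 d lam A Atil LU ->
  1/2 <= gg d lam A Atil LU LW u <= 1.
Proof.
move=> hl hA hLU hLW0 hLW hAt hd /andP[u0 uR].
have [[ha [hg [hg2 hB]]] [hc [hc2 hc3]]] := consts hl hA hLU hLW0 hLW hAt hd.
have [he [he2 hCb]] := eps_facts hl hA hLU hLW0 hLW hAt hd.
have hph x := @phi_bounds R d lam A Atil LU LW x hl hA hLU hLW0 hLW hAt.
set R1' := R1 d lam A Atil LU in uR hc3 *.
set k := (LU + LW) / alph lam LU + alph lam LU
   + 96 * eps d lam A Atil LU LW * Num.max (1 / (2 * alph lam LU)) 1.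
have phiE s : phi d lam A Atil LU LW s = expR (- (1/8) * k * s ^+ 2) by [].
have hM : 1 <= Num.max (1 / (2 * alph lam LU)) 1 by rewrite le_max lexx orbT.
have hk : 48 <= kappa0 lam LU LW - k.
  rewrite /kappa0 /k; set M := Num.max _ _ in hM *.
  have : 96 * eps d lam A Atil LU LW * M <= 48 * M by nra.
  lra.
have hk0 : 0 <= k.
  rewrite /k; apply: addr_ge0; [apply: addr_ge0|].
  - by apply: divr_ge0; lra.
  - lra.
  - apply: mulr_ge0; last lra; apply: mulr_ge0 => //; lra.
have hPhi t : 0 <= t -> 0 <= Phi d lam A Atil LU LW t <= t.
  move=> t0; have := @int0_sand R t 0 1 (phi d lam A Atil LU LW) t0 (lexx 0).
  rewrite mul0r mul1r; apply => x _; have /andP[h1 h2] := hph x.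
  by rewrite h2 ltW.
set E1 := expR ((1/8) * k * R1' ^+ 2).
have hE1 : 0 < E1 by exact: expR_gt0.
have hR0 : 0 <= R1' by exact: sqrtr_ge0.
have hI : 0 <= int0 u (fun t => Phi d lam A Atil LU LW t / phi d lam A Atil LU LW t)
            <= (R1' * E1) * u.
  have := @int0_sand R u 0 (R1' * E1)
     (fun t => Phi d lam A Atil LU LW t / phi d lam A Atil LU LW t) u0 (lexx 0).
  rewrite mul0r; apply => t /andP[t0 tu].
  have /andP[p1 p2] := hPhi t t0.
  rewrite phiE -expRN.
  apply/andP; split; first by apply: mulr_ge0 => //; exact: expR_ge0.
  apply: ler_pM => //.
  - lra.
  - rewrite ler_expR.
    have : t ^+ 2 <= R1' ^+ 2 by rewrite ler_sqr ?nnegrE //; lra.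
    nra.
set I := int0 _ _ in hI.
have gE : gg d lam A Atil LU LW u = 1 - 7 * cc d lam A Atil LU LW / 4 * I.
  by rewrite /gg hCb.
rewrite gE.
have hI2 : I <= R1' ^+ 2 * E1.
  have : R1' * E1 * u <= R1' * E1 * R1' by apply: ler_wpM2l => //; nra.
  rewrite expr2; lra.
have key : 7 * cc d lam A Atil LU LW * (R1' ^+ 2 * E1) <= 1/12.
  set y := R1' ^+ 2.
  have y0 : 0 <= y by rewrite /y sqr_ge0.
  have h1 : 7 * cc d lam A Atil LU LW * (y * E1) <=
            1 / 2 * (y * (expR (- (1 / 8) * kappa0 lam LU LW * y) * E1)).
    have := ler_wpM2r (mulr_ge0 y0 (ltW hE1)) hc3. 
    by rewrite -/y; lra.
  have h2 : expR (- (1 / 8) * kappa0 lam LU LW * y) * E1 <= expR (- (6 * y)).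
    rewrite /E1 -expRD ler_expR -/y; nra.
  have h3 : y * expR (- (6 * y)) <= 1/6.
    rewrite expRN.
    have := expR_ge1Dx (6 * y).
    have := expR_gt0 (6 * y).
    set z := expR (6 * y) => z0 zz.
    rewrite ler_pdivrMr //; last first.
    have := mulfV (lt0r_neq0 z0).
    nra.
  have : y * (expR (- (1 / 8) * kappa0 lam LU LW * y) * E1) <= y * expR (- (6 * y)).
    by apply: ler_wpM2l.
  lra.
have : 0 <= 7 * cc d lam A Atil LU LW * I by apply: mulr_ge0 => //; lra.
have : 7 * cc d lam A Atil LU LW * I <= 7 * cc d lam A Atil LU LW * (R1' ^+ 2 * E1).
  by apply: ler_wpM2l => //; lra.
lra.
Qed.

Lemma ff_lower (R : realType) (d : nat) (lam A Atil LU LW : R) s :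
  0 < lam -> 0 <= A -> 0 < LU -> 0 <= LW -> LW < lam / 8 -> 0 <= Atil ->
  (0 < d)%N -> 0 <= s ->
  phi d lam A Atil LU LW (R1 d lam A Atil LU) / 2 * Num.min s (R1 d lam A Atil LU)
   <= ff d lam A Atil LU LW s.
Proof.
move=> hl hA hLU hLW0 hLW hAt hd s0.
have hph x := @phi_bounds R d lam A Atil LU LW x hl hA hLU hLW0 hLW hAt.
have hR0 : 0 <= R1 d lam A Atil LU by exact: sqrtr_ge0.
set m := Num.min s _.
have m0 : 0 <= m by rewrite /m le_min s0 hR0.
have mR : m <= R1 d lam A Atil LU by rewrite /m ge_min lexx orbT.
have /andP[p1 p2] := hph (R1 d lam A Atil LU).
have lo0 : 0 <= phi d lam A Atil LU LW (R1 d lam A Atil LU) / 2.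
  by apply: divr_ge0 => //; exact: ltW.
rewrite /ff -/m.
suff hb : forall x, 0 <= x <= m -> phi d lam A Atil LU LW (R1 d lam A Atil LU) / 2 <=
   phi d lam A Atil LU LW x * gg d lam A Atil LU LW x <= 1.
  by have /andP[] := int0_sand m0 lo0 hb.
move=> x /andP[x0 xm].
have xR : 0 <= x <= R1 d lam A Atil LU by rewrite x0 (le_trans xm mR).
have /andP[g1 g2] := @gg_bound R d lam A Atil LU LW x hl hA hLU hLW0 hLW hAt hd xR.
have /andP[q1 q2] := hph x.
have hmono : phi d lam A Atil LU LW (R1 d lam A Atil LU) <= phi d lam A Atil LU LW x.
  rewrite /phi ler_expR.
  set k := (_ + _ + _).
  have hk : 0 <= k.
    have := hph 1; rewrite /phi expR_le1 expr1n mulr1 /= -/k; lra.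
  have : x ^+ 2 <= R1 d lam A Atil LU ^+ 2 by rewrite ler_sqr ?nnegrE //; lra.
  nra.
apply/andP; split; first nra.
have : phi d lam A Atil LU LW x * gg d lam A Atil LU LW x <= 1 * 1.
  by apply: ler_pM => //; [exact: ltW| lra].
lra.
Qed.

Lemma int0_0 (R : realType) (f : R -> R) : int0 0 f = 0.
Proof.
rewrite /int0 /Rintegral.
have mD : measurable (`[0, 0]%classic : set R) by exact: measurable_itv.
have -> : (\int[@lebesgue_measure R]_(x in `[0%R, 0%R]%classic) (f x)%:E = 0)%E; last by [].
transitivity (\int[@lebesgue_measure R]_(x in `[0%R, 0%R]%classic) (cst (f 0)%:E) x)%E.
  apply: eq_integral => x; rewrite inE /= in_itv /= => hx.
  by have -> : x = 0 by apply/eqP; rewrite eq_le andbC.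
have mu0 : (@lebesgue_measure R (`[0%R, 0%R]%classic) = 0)%E.
  by rewrite lebesgue_measure_itv /= ltxx.
rewrite integral_cst //.
rewrite [X in (_ * X)%E](_ : _ = 0%E) ?mule0 //.
Qed.

Lemma dot_ge0 (R : realType) d (x : 'rV[R]_d) : 0 <= dot x x.
Proof. by rewrite /dot; apply: sumr_ge0 => i _; rewrite -expr2 sqr_ge0. Qed.

Lemma enorm_ge0 (R : realType) d (x : 'rV[R]_d) : 0 <= enorm x.
Proof. exact: sqrtr_ge0. Qed.

Lemma enorm_sq (R : realType) d (x : 'rV[R]_d) : enorm x ^+ 2 = dot x x.
Proof. by rewrite /enorm sqr_sqrtr // dot_ge0. Qed.

Lemma dot_add_le (R : realType) d (a b : 'rV[R]_d) :
  dot (a + b) (a + b) <= 2 * dot a a + 2 * dot b b.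
Proof.
rewrite /dot !mulr_sumr -big_split /=; apply: ler_sum => i _; rewrite !mxE.
have := sqr_ge0 (a ord0 i - b ord0 i); nra.
Qed.

Lemma dot_sub_le (R : realType) d (a b : 'rV[R]_d) :
  dot (a - b) (a - b) <= 2 * dot a a + 2 * dot b b.
Proof.
rewrite /dot !mulr_sumr -big_split /=; apply: ler_sum => i _; rewrite !mxE.
have := sqr_ge0 (a ord0 i + b ord0 i); nra.
Qed.

Lemma H_lower (R : realType) d (U : 'rV[R]_d -> R) (lam : R) (x v : 'rV[R]_d) :
  0 < lam -> 0 <= U x ->
  lam / (lam + 6) * (dot x x + dot v v) <= Hf lam U x v.
Proof.
move=> hl hU.
set c := lam / (lam + 6).
have hc : c * (lam + 6) = lam by rewrite /c divfK //; apply/eqP; lra.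
have c0 : 0 < c by rewrite /c divr_gt0 //; lra.
have c1 : c < 1 by rewrite /c ltr_pdivrMr; lra.
have hg : gam lam < 1/2 by rewrite /gam ltr_pdivrMr; lra.
set p := 6 * (1 - gam lam) + lam.
have hp : 3 + lam <= p by rewrite /p; lra.
rewrite /Hf -/p !enorm_sq.
suff : c * (dot x x + dot v v) <= p * dot x x + 12 * dot x v + 12 * dot v v by nra.
rewrite /dot mulrDr !mulr_sumr -!big_split /=; apply: ler_sum => i _.
set a := x ord0 i; set b := v ord0 i.
set q := p - c.
have q0 : 0 < q by rewrite /q; lra.
have hq : 36 <= q * (12 - c).
  have : 3 + lam - c <= q by rewrite /q; lra.
  nra.
have : 0 <= q * (p * (a * a) + 12 * (a * b) + 12 * (b * b) - c * (a * a + b * b)).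
  have e : q * (p * (a * a) + 12 * (a * b) + 12 * (b * b) - c * (a * a + b * b))
     = (q * a + 6 * b) ^+ 2 + (q * (12 - c) - 36) * (b * b).
    by rewrite /q; ring.
  rewrite e; apply: addr_ge0; first exact: sqr_ge0.
  by apply: mulr_ge0; [lra | rewrite -expr2 sqr_ge0].
rewrite pmulr_rge0 // subr_ge0; lra.
Qed.

Lemma L1 (R : realType) (cf E k Z r ff Q : R) :
  0 < cf -> 0 <= E -> 0 <= k -> 0 <= r -> Z <= k * r -> cf * r <= ff -> 1 <= Q ->
  Z <= (k / cf + E) * (ff * Q).
Proof.
move=> c0 E0 k0 r0 hZ hf hQ.
have f0 : 0 <= ff by nra.
have hk : k / cf * cf = k by rewrite divfK // gt_eqF.
have kc0 : 0 <= k / cf by apply: divr_ge0 => //; exact: ltW.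
have h1 : k / cf * ff <= k / cf * (ff * Q) by apply: ler_wpM2l => //; nra.
have h2 : k * r <= k / cf * ff by rewrite -{1}hk -mulrA; apply: ler_wpM2l.
have h3 : 0 <= E * (ff * Q) by apply: mulr_ge0 => //; nra.
rewrite mulrDl; lra.
Qed.

Lemma L2 (R : realType) (F e T Q a b ff Z E : R) :
  0 < F -> 0 < e -> 0 <= T -> 1 + e * T <= Q -> 0 <= a -> 0 <= b -> F <= ff ->
  Z <= a + b * T -> 0 <= E -> Z <= (E + (a + b / e) / F) * (ff * Q).
Proof.
move=> F0 e0 T0 hQ a0 b0 hF hZ E0.
set c := (a + b / e) / F.
have be : b / e * e = b by rewrite divfK // gt_eqF.
have be0 : 0 <= b / e by apply: divr_ge0 => //; exact: ltW.
have cF : c * F = a + b / e by rewrite /c divfK // gt_eqF.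
have c0 : 0 <= c by apply: divr_ge0; [lra| exact: ltW].
have Q1 : 1 <= Q by nra.
have h1 : a + b * T <= (a + b / e) * Q.
  have : (a + b / e) * (1 + e * T) <= (a + b / e) * Q by apply: ler_wpM2l => //; lra.
  have : a + b * T <= (a + b / e) * (1 + e * T).
    rewrite mulrDr mulr1 mulrDl.
    have -> : b / e * (e * T) = b * T by rewrite mulrA be.
    have : a <= a * (e * T) + a by have := mulr_ge0 a0 (mulr_ge0 (ltW e0) T0); lra.
    lra.
  lra.
have h2 : (a + b / e) * Q <= c * (ff * Q).
  rewrite -cF mulrA; apply: ler_wpM2r; first lra.
  by apply: ler_wpM2l.
have h3 : 0 <= E * (ff * Q) by apply: mulr_ge0 => //; nra.
rewrite mulrDl; lra.
Qed.

Lemma enorm0 (R : realType) (x : 'rV[R]_0) : enorm x = 0.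
Proof. by rewrite /enorm /dot big_ord0 sqrtr0. Qed.

Lemma case1_arith (R : realFieldType) (dx dv w al ia r K : R) :
  0 <= dx -> 0 <= dv -> 0 <= w -> 0 < al -> ia * al = 1 -> 0 < ia ->
  r = al * dx + w -> dv ^+ 2 <= 2 * w ^+ 2 + 2 * dx ^+ 2 -> K = 3 * ia ^+ 2 + 2 ->
  [/\ dx <= ia * r, dx ^+ 2 + dv ^+ 2 <= K * r ^+ 2 & dx + dv <= (1 + 2 * K) * r].
Proof.
move=> dx0 dv0 w0 al0 iaa ia0 hr hdv hK.
have r0 : 0 <= r by rewrite hr; have := mulr_ge0 (ltW al0) dx0; lra.
have dxr : dx <= ia * r.
  rewrite hr mulrDr mulrA iaa mul1r; have := mulr_ge0 (ltW ia0) w0; lra.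
have wr : w <= r by rewrite hr; have := mulr_ge0 (ltW al0) dx0; lra.
have h1 : dx ^+ 2 <= ia ^+ 2 * r ^+ 2.
  by rewrite -exprMn ler_sqr ?nnegrE //; apply: mulr_ge0 => //; exact: ltW.
have h2 : w ^+ 2 <= r ^+ 2 by rewrite ler_sqr ?nnegrE.
have hS : dx ^+ 2 + dv ^+ 2 <= K * r ^+ 2.
  rewrite hK mulrDl; lra.
split => //.
have r2 : 0 <= r ^+ 2 by exact: sqr_ge0.
have K0 : 0 <= K by rewrite hK; have := sqr_ge0 ia; lra.
have : (dx + dv) ^+ 2 <= ((1 + 2 * K) * r) ^+ 2.
  have e1 : (dx + dv) ^+ 2 <= 2 * (dx ^+ 2 + dv ^+ 2).
    have := sqr_ge0 (dx - dv).
    have -> : (dx - dv) ^+ 2 = 2 * (dx ^+ 2 + dv ^+ 2) - (dx + dv) ^+ 2 by ring.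
    lra.
  have e2 : 2 * K <= (1 + 2 * K) ^+ 2.
    have -> : (1 + 2 * K) ^+ 2 = 1 + 2 * K + 2 * K + 4 * K ^+ 2 by ring.
    have := sqr_ge0 K; lra.
  rewrite exprMn.
  have := ler_wpM2r r2 e2.
  lra.
rewrite ler_sqr ?nnegrE //; first lra.
by apply: mulr_ge0 => //; lra.
Qed.

Lemma case2_arith (R : realFieldType) (dx dv w al X V X' V' : R) :
  0 <= dx -> 0 <= dv -> 0 <= w -> 0 <= X -> 0 <= V -> 0 <= X' -> 0 <= V' ->
  dx ^+ 2 <= 2 * X + 2 * X' -> dv ^+ 2 <= 2 * V + 2 * V' ->
  w ^+ 2 <= 2 * dx ^+ 2 + 2 * dv ^+ 2 ->
  [/\ dx + dv <= 1 + 4 * (X + V + X' + V'),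
      dx ^+ 2 + dv ^+ 2 <= 0 + 2 * (X + V + X' + V') &
      al * dx + w <= 1 + (4 * al ^+ 2 + 8) * (X + V + X' + V')].
Proof.
move=> dx0 dv0 w0 X0 V0 X'0 V'0 hx hv hw.
have sq1 (t : R) : t <= 1 + t ^+ 2.
  have := sqr_ge0 (t - 1).
  have -> : (t - 1) ^+ 2 = 1 + t ^+ 2 - 2 * t by ring.
  have := sqr_ge0 t; lra.
have e1 : (dx + dv) ^+ 2 <= 2 * (dx ^+ 2 + dv ^+ 2).
  have := sqr_ge0 (dx - dv).
  have -> : (dx - dv) ^+ 2 = 2 * (dx ^+ 2 + dv ^+ 2) - (dx + dv) ^+ 2 by ring.
  lra.
split.
- have := sq1 (dx + dv); lra.
- lra.
- have e2 : (al * dx + w) ^+ 2 <= 2 * (al ^+ 2 * dx ^+ 2) + 2 * w ^+ 2.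
    have := sqr_ge0 (al * dx - w).
    have -> : (al * dx - w) ^+ 2 = 2 * (al ^+ 2 * dx ^+ 2) + 2 * w ^+ 2 - (al * dx + w) ^+ 2 by ring.
    lra.
  have e3 : al ^+ 2 * dx ^+ 2 <= al ^+ 2 * (2 * X + 2 * X').
    by apply: ler_wpM2l => //; exact: sqr_ge0.
  have e4 : al ^+ 2 * (X + V + X' + V') >= al ^+ 2 * (X + X').
    by apply: ler_wpM2l; [exact: sqr_ge0| lra].
  have := sq1 (al * dx + w).
  have -> : (4 * al ^+ 2 + 8) * (X + V + X' + V') = 4 * (al ^+ 2 * (X + V + X' + V')) + 8 * (X + V + X' + V') by ring.
  rewrite (_ : al ^+ 2 * (2 * X + 2 * X') = 2 * (al ^+ 2 * (X + X'))) in e3; last by ring.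
  lra.
Qed.

Lemma case2_dx (R : realFieldType) (dx cH j h h' X X' H H' : R) :
  0 <= dx -> 0 < cH -> j * cH = 1 -> 0 < j -> 0 <= h -> 0 <= h' ->
  h ^+ 2 = H -> h' ^+ 2 = H' -> cH * X <= H -> cH * X' <= H' -> 0 <= X -> 0 <= X' ->
  dx ^+ 2 <= 2 * X + 2 * X' -> dx <= 0 + (1 + 2 * j) * (h + h').
Proof.
move=> dx0 c0 jc j0 h0 h'0 hH hH' hX hX' X0 X'0 hdx.
rewrite add0r.
have e1 : cH * dx ^+ 2 <= 2 * (h ^+ 2 + h' ^+ 2).
  have := ler_wpM2l (ltW c0) hdx; rewrite hH hH'; lra.
have e2 : dx ^+ 2 <= 2 * j * (h ^+ 2 + h' ^+ 2).
  have := ler_wpM2l (ltW j0) e1; rewrite mulrA jc mul1r; lra.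
have e3 : 2 * j <= (1 + 2 * j) ^+ 2.
  have -> : (1 + 2 * j) ^+ 2 = 1 + 2 * j + 2 * j + 4 * j ^+ 2 by ring.
  have := sqr_ge0 j; lra.
have e4 : h ^+ 2 + h' ^+ 2 <= (h + h') ^+ 2.
  have -> : (h + h') ^+ 2 = h ^+ 2 + h' ^+ 2 + 2 * (h * h') by ring.
  have := mulr_ge0 h0 h'0; lra.
have e5 : 0 <= h ^+ 2 + h' ^+ 2 by have := sqr_ge0 h; have := sqr_ge0 h'; lra.
have : dx ^+ 2 <= ((1 + 2 * j) * (h + h')) ^+ 2.
  rewrite exprMn.
  have := ler_wpM2l (ltW j0) e4.
  have := ler_wpM2r (sqr_ge0 (h + h')) e3.
  lra.
rewrite ler_sqr ?nnegrE //; apply: mulr_ge0; [lra| exact: addr_ge0].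
Qed.

Unset Implicit Arguments. Set Strict Implicit.
Local Close Scope classical_set_scope.
Theorem lemma2p6 (R : realType) (d : nat)
  (U W : 'rV[R]_d -> R) (gradU gradW : 'rV[R]_d -> 'rV[R]_d)
  (lam A Atil LU LW : R)
  (hU : forall x, differentiable U x /\ forall h, 'd U x h = dot (gradU x) h)
  (hW : forall x, differentiable W x /\ forall h, 'd W x h = dot (gradW x) h)
  (hU0 : forall x, 0 <= U x) (hlam : 0 < lam) (hA : 0 <= A)
  (hA1 : forall x, dot (gradU x) x / 2
                   >= lam * (U x + enorm x ^+ 2 / 4) - A)
  (hLU : 0 < LU)
  (hA2 : forall x y, enorm (gradU x - gradU y) <= LU * enorm (x - y))
  (hWeven : forall x, W (- x) = W x)
  (hLW0 : 0 <= LW) (hLW : LW < lam / 8)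
  (hA3 : forall x y, enorm (gradW x - gradW y) <= LW * enorm (x - y))
  (hAt0 : 0 <= Atil)
  (hAt : forall x, U x >= lam / 6 * enorm x ^+ 2 - Atil) :
  exists C1 C2 Cr Cz : R, [/\ 0 < C1, 0 < C2, 0 < Cr, 0 < Cz &
    forall x x' v v' : 'rV[R]_d,
      let rh := rho lam A Atil LU LW U x v x' v' in
      [/\ enorm (x - x') + enorm (v - v') <= C1 * rh,
          enorm (x - x') ^+ 2 + enorm (v - v') ^+ 2 <= C2 * rh,
          rr lam LU (x) x' v v' <= Cr * rh &
          enorm (x - x') <= Cz * ff d lam A Atil LU LW (rr lam LU x x' v v')
             * (1 + eps d lam A Atil LU LW * Num.sqrt (Hf lam U x v)
                  + eps d lam A Atil LU LW * Num.sqrt (Hf lam U x' v'))]].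
Proof.
case: d U W gradU gradW hU hW hU0 hA1 hA2 hWeven hA3 hAt => [|d'] U W gradU gradW hU hW hU0 hA1 hA2 hWeven hA3 hAt.
  exists 1, 1, 1, 1; split => // x x' v v'; cbv zeta.
  have hR0 : 0 <= R1 0 lam A Atil LU by exact: sqrtr_ge0.
  have ff0 : ff 0 lam A Atil LU LW (rr lam LU x x' v v') = 0.
    rewrite /rr !enorm0 mulr0 addr0 /ff.
    have -> : Num.min 0 (R1 0 lam A Atil LU) = 0.
      by apply/eqP; rewrite eq_le ge_min lexx le_min lexx hR0.
    exact: int0_0.
  rewrite /rho; set F := ff _ _ _ _ _ _ _; have -> : F = 0 by exact: ff0.
  rewrite !enorm0 /rr !enorm0 mulr0 addr0; split; rewrite ?mul0r ?mulr0 ?expr0n ?addr0 ?mul0r //.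
set d := d'.+1.
have hd : (0 < d)%N by [].
have [[ha [hg [hg2 hB]]] [hc [hc2 hc3]]] := consts hlam hA hLU hLW0 hLW hAt0 hd.
have [he [he2 hCb]] := eps_facts hlam hA hLU hLW0 hLW hAt0 hd.
set al := alph lam LU in ha *.
set e := eps d lam A Atil LU LW in he he2 *.
set cH := lam / (lam + 6).
have cH0 : 0 < cH by rewrite /cH divr_gt0 //; lra.
set R1v := R1 d lam A Atil LU.
have R10 : 0 < R1v.
  rewrite /R1v /R1 -/al sqrtr_gt0; apply: mulr_gt0; last lra.
  apply: divr_gt0.
    apply: mulr_gt0 => //; apply: addr_gt0; first by rewrite exprn_gt0 //; lra.
    by rewrite exprn_gt0.
  apply: mulr_gt0; first by apply: mulr_gt0.
  by rewrite lt_min; apply/andP; split; lra.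
have /andP[ph0 _] := @phi_bounds R d lam A Atil LU LW R1v hlam hA hLU hLW0 hLW hAt0.
set cf := phi d lam A Atil LU LW R1v / 2.
have cf0 : 0 < cf by rewrite /cf divr_gt0.
set F := cf * R1v.
have F0 : 0 < F by rewrite /F mulr_gt0.
set ia := 1 / al.
have ia0 : 0 < ia by rewrite /ia divr_gt0.
have iaa : ia * al = 1 by rewrite /ia mul1r mulVf // gt_eqF.
set K := 3 * ia ^+ 2 + 2.
have K0 : 0 < K by rewrite /K; have := sqr_ge0 ia; lra.
set j := 1 / cH.
have j0 : 0 < j by rewrite /j divr_gt0.
have jc : j * cH = 1 by rewrite /j mul1r mulVf // gt_eqF.
set K4 := 1 + 2 * j.
set ec := e * cH.
have ec0 : 0 < ec by rewrite /ec mulr_gt0.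
exists ((1 + 2 * K) / cf + (1 + 4 / ec) / F),
       ((2 * K * R1v) / cf + (0 + 2 / ec) / F),
       (1 / cf + (1 + (4 * al ^+ 2 + 8) / ec) / F),
       (ia / cf + (0 + K4 / e) / F).
have pos1 : forall a b, 0 < a -> 0 <= b -> 0 < a / cf + b / F.
  move=> a b a0 b0; have := divr_gt0 a0 cf0; have := divr_ge0 b0 (ltW F0); lra.
have pos2 : forall a b, 0 < a -> 0 <= b -> 0 < a / cf + (0 + b) / F.
  by move=> a b a0 b0; rewrite add0r; apply: pos1.
have Eg : forall a b c, 0 <= a -> 0 <= b -> 0 < c -> 0 <= (a + b / c) / F.
  move=> a b c a0 b0 c0; apply: divr_ge0; last exact: ltW.
  by apply: addr_ge0 => //; apply: divr_ge0 => //; exact: ltW.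
have al2 : 0 <= 4 * al ^+ 2 + 8 by have := sqr_ge0 al; lra.
have K40 : 0 <= K4 by rewrite /K4; lra.
split.
- apply: pos1; [lra| apply: addr_ge0 => //; apply: divr_ge0; lra].
- apply: pos2; [by rewrite !mulr_gt0 //; lra | apply: divr_ge0; lra].
- apply: pos1; [lra| apply: addr_ge0 => //; apply: divr_ge0; [|lra]].
  by have := sqr_ge0 al; lra.
- apply: pos2 => //; apply: divr_ge0; [rewrite /K4; lra| lra].
move=> x x' v v'; cbv zeta.
set dx := enorm (x - x'); set dv := enorm (v - v').
set w := enorm (x - x' + (v - v')).
have dx0 : 0 <= dx by exact: enorm_ge0.
have dv0 : 0 <= dv by exact: enorm_ge0.
have w0 : 0 <= w by exact: enorm_ge0.
have hdv : dv ^+ 2 <= 2 * w ^+ 2 + 2 * dx ^+ 2.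
  rewrite /dv /w /dx !enorm_sq.
  have := dot_sub_le (x - x' + (v - v')) (x - x').
  by rewrite addrC addKr.
have hw : w ^+ 2 <= 2 * dx ^+ 2 + 2 * dv ^+ 2.
  by rewrite /dv /w /dx !enorm_sq; exact: dot_add_le.
have rE : rr lam LU x x' v v' = al * dx + w by [].
rewrite rE.
set r := al * dx + w.
have r0 : 0 <= r by apply: addr_ge0 => //; apply: mulr_ge0 => //; exact: ltW.
set Q := 1 + e * Hf lam U x v + e * Hf lam U x' v'.
have H0 : forall y z : 'rV[R]_d, 0 <= Hf lam U y z.
  move=> y z; apply: le_trans (H_lower z hlam (hU0 y)).
  by apply: mulr_ge0; [exact: ltW| apply: addr_ge0; exact: dot_ge0].
have Q1 : 1 <= Q.
  rewrite /Q -addrA lerDl; apply: addr_ge0; apply: mulr_ge0 => //; exact: ltW.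
have hff := @ff_lower R d lam A Atil LU LW r hlam hA hLU hLW0 hLW hAt0 hd r0.
rewrite -/R1v -/cf in hff.
rewrite -[_ * _ * (1 + _ + _)]mulrA.
have n2 : (0 : R) <= 2 by [].
have n4 : (0 : R) <= 4 by [].
have [rR|Rr] := lerP r R1v.
- have mr : Num.min r R1v = r by apply/eqP; rewrite eq_le ge_min lexx le_min lexx rR.
  rewrite mr in hff.
  have Qs : 1 <= 1 + e * Num.sqrt (Hf lam U x v) + e * Num.sqrt (Hf lam U x' v').
    rewrite -addrA lerDl; apply: addr_ge0; apply: mulr_ge0 => //; try exact: ltW; exact: sqrtr_ge0.
  have [c1 c2 c3] := case1_arith dx0 dv0 w0 ha iaa ia0 (erefl r) hdv (erefl K).
  split.
  + apply: (L1 (r:=r)) => //.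
    * by apply: Eg => //; try exact: ler01; exact: lexx.
    * by apply: addr_ge0; [exact: ler01| apply: mulr_ge0 => //; exact: ltW].
  + apply: (L1 (r:=r)) => //.
    * by apply: Eg => //; try exact: ler01; exact: lexx.
    * by apply: mulr_ge0; [apply: mulr_ge0 => //|]; exact: ltW.
    * have hK2 : K * r ^+ 2 <= K * R1v * r.
        by rewrite expr2 mulrA; apply: ler_wpM2r => //; apply: ler_wpM2l => //; exact: ltW.
      have hpos := mulr_ge0 (mulr_ge0 (ltW K0) (ltW R10)) r0.
      clear -c2 hK2 hpos; lra.
  + apply: (L1 (r:=r)) => //.
    all: try (by apply: Eg => //; try exact: ler01; exact: lexx).
    all: try exact: ler01.
    all: try (clear -r0; lra).
  + apply: (L1 (r:=r)) => //.
    all: try (by apply: Eg => //; try exact: ler01; exact: lexx).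
    all: try (clear -ia0; lra).
- have mr : Num.min r R1v = R1v by apply/eqP; rewrite eq_le ge_min lexx orbT le_min lexx (ltW Rr).
  rewrite mr -/F in hff.
  set X := dot x x; set V := dot v v; set X' := dot x' x'; set V' := dot v' v'.
  have X0 : 0 <= X by exact: dot_ge0.
  have V0 : 0 <= V by exact: dot_ge0.
  have X'0 : 0 <= X' by exact: dot_ge0.
  have V'0 : 0 <= V' by exact: dot_ge0.
  have T0 : 0 <= X + V + X' + V' by rewrite !addr_ge0.
  have hH1 := H_lower v hlam (hU0 x).
  have hH2 := H_lower v' hlam (hU0 x').
  rewrite -/cH -/X -/V in hH1; rewrite -/cH -/X' -/V' in hH2.
  have QT : 1 + ec * (X + V + X' + V') <= Q.
    rewrite /Q /ec.
    have h1 := ler_wpM2l (ltW he) hH1; have h2 := ler_wpM2l (ltW he) hH2.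
    have -> : e * cH * (X + V + X' + V') = e * (cH * (X + V)) + e * (cH * (X' + V')).
      by ring.
    clear -h1 h2; lra.
  have hdx : dx ^+ 2 <= 2 * X + 2 * X' by rewrite /dx enorm_sq; exact: dot_sub_le.
  have hdv2 : dv ^+ 2 <= 2 * V + 2 * V' by rewrite /dv enorm_sq; exact: dot_sub_le.
  have [d1 d2 d3] := case2_arith al dx0 dv0 w0 X0 V0 X'0 V'0 hdx hdv2 hw.
  split.
  + apply: (L2 (T := X + V + X' + V')) => //.
    apply: divr_ge0; last exact: ltW.
    apply: addr_ge0; first exact: ler01.
    apply: mulr_ge0 => //; exact: ltW.
  + apply: (L2 (T := X + V + X' + V')) => //.
    apply: divr_ge0; last exact: ltW.
    apply: mulr_ge0; last exact: ltW.
    apply: mulr_ge0 => //; exact: ltW.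
  + apply: (L2 (T := X + V + X' + V')) => //.
    apply: divr_ge0; [exact: ler01|exact: ltW].
  + set h := Num.sqrt (Hf lam U x v); set h' := Num.sqrt (Hf lam U x' v').
    have h0 : 0 <= h by exact: sqrtr_ge0.
    have h'0 : 0 <= h' by exact: sqrtr_ge0.
    have hh : h ^+ 2 = Hf lam U x v by rewrite /h sqr_sqrtr // H0.
    have hh' : h' ^+ 2 = Hf lam U x' v' by rewrite /h' sqr_sqrtr // H0.
    have hX : cH * X <= Hf lam U x v.
      apply: le_trans hH1; apply: ler_wpM2l; [exact: ltW| rewrite lerDl //].
    have hX' : cH * X' <= Hf lam U x' v'.
      apply: le_trans hH2; apply: ler_wpM2l; [exact: ltW| rewrite lerDl //].
    have hz := case2_dx dx0 cH0 jc j0 h0 h'0 hh hh' hX hX' X0 X'0 hdx.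
    rewrite -addrA -mulrDr.
    apply: (L2 (T := h + h')) => //.
    exact: addr_ge0.
    apply: divr_ge0; exact: ltW.
Qed.
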